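(* Let $(X,d)$ be a metric space, $q\geq 1$ a constant, and $T\subseteq X$ with $|T|=k\ge 2$. Then \[ \frac{k}{2}\,\mathrm{st}^q(T)\le \mathrm{cl}^q(T)\le 2^{q-1}k\,\mathrm{st}^q(T),\] and, if $k$ is even, \[ \frac{2(k-1)}{k}\,\mathrm{bp}^q(T)\le \mathrm{cl}^q(T)\le (2^q+1)\,\mathrm{bp}^q(T).\]
   Context: $d^q(u,v)=d(u,v)^q$. $\mathrm{cl}^q(T)=\sum_{\{u,v\}\subseteq T} d^q(u,v)$; $\mathrm{st}^q(T)=\min_{z\in T}\sum_{u\in T\setminus\{z\}} d^q(z,u)$; $\mathrm{bp}^q(T)=\min_{L\subseteq T,|L|=\lfloor |T|/2\rfloor}\sum_{\ell\in L,r\in T\setminus L} d^q(\ell,r)$. *)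

(* Defs.v *)
From HB Require Import structures.
From mathcomp Require Import all_boot all_order all_algebra.
From mathcomp Require Import all_classical all_reals all_analysis.
Set Implicit Arguments. Unset Strict Implicit. Unset Printing Implicit Defensive.
Import Order.TTheory GRing.Theory Num.Theory.
Local Open Scope ring_scope.

Definition is_metric (R : realType) (X : Type) (d : X -> X -> R) : Prop :=
  (forall x y, 0 <= d x y) /\
  (forall x y, d x y = 0 <-> x = y) /\
  (forall x y, d x y = d y x) /\
  (forall x y z, d x z <= d x y + d y z).

(* A k-point set T = {t 0, ..., t (k-1)} is given by an injective map t. *)
Section Costs.
Variables (R : realType) (X : Type) (d : X -> X -> R) (q : R) (k : nat)
          (t : 'I_k -> X).

Definition dq (x y : X) : R := (d x y) `^ q.

Definition clq : R := \sum_(i < k) \sum_(j < k | (i < j)%N) dq (t i) (t j).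

Definition star_cost (z : 'I_k) : R := \sum_(u < k | u != z) dq (t z) (t u).

Definition stq : R :=
  if [pick z : 'I_k] is Some z0 then star_cost (Order.arg_min z0 (fun _ => true) star_cost)
  else 0.

Definition bip_cost (L : {set 'I_k}) : R :=
  \sum_(l in L) \sum_(r in ~: L) dq (t l) (t r).

Definition bpq : R :=
  if [pick L : {set 'I_k} | #|L| == k./2] is Some L0 then
    bip_cost (Order.arg_min L0 (fun L : {set 'I_k} => #|L| == k./2) bip_cost)
  else 0.
End Costs.

(* Main.v *)
Require Import Defs.
From HB Require Import structures.
From mathcomp Require Import all_boot all_order all_algebra.
From mathcomp Require Import all_classical all_reals all_analysis.
From mathcomp Require Import ring lra zify.
Import Order.TTheory GRing.Theory Num.Theory.
Local Open Scope ring_scope.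
Local Open Scope convex_scope.

Lemma half_spec (R : realType) : Itv.spec (@Itv.num_sem R) (Itv.Real `[0%Z, 1%Z]) (2^-1 : R).
Proof.
rewrite /Itv.spec /Itv.num_sem /= in_itv /= realE.
by rewrite invr_ge0 ler0n /= invf_le1 ?ler1n.
Qed.

Lemma powR_half_conv (R : realType) (q a b : R) : 1 <= q -> 0 <= a -> 0 <= b ->
  (a + b) `^ q <= 2 `^ (q - 1) * (a `^ q + b `^ q).
Proof.
move=> q1 a0 b0.
have := @convex_powR R q q1 (@Itv.Def _ _ _ (2^-1 : R) (half_spec R)) a b.
rewrite !inE /= !in_itv /= a0 b0 => /(_ isT isT).
rewrite /unstable.onem.
set m := (X in X `^ q <= _ -> _).
have -> : m = 2^-1 * (a + b).
  rewrite /m /conv /= /unstable.onem.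
  change (2^-1 * a + (1 - 2^-1) * b = 2^-1 * (a + b)).
  by field.
have e2 : 1 - 2^-1 = (2^-1 : R) by field.
move=> H0.
have H : (2^-1 * (a + b)) `^ q <= 2^-1 * (a `^ q + b `^ q).
  move: H0; rewrite /conv /= /unstable.onem.
  change ((2^-1 * (a + b)) `^ q <= 2^-1 * a `^ q + (1 - 2^-1) * b `^ q -> (2^-1 * (a + b)) `^ q <= 2^-1 * (a `^ q + b `^ q)).
  by rewrite e2 -mulrDr.
have -> : a + b = 2 * (2^-1 * (a + b)) by field.
rewrite powRM ?mulr_ge0 ?invr_ge0 ?addr_ge0 //.
have h2 : (2:R) `^ (1 + (q - 1)) = 2 * 2 `^ (q - 1).
  rewrite [LHS]powRD ?powRr1 ?ler0n //; last by apply/implyP => _; rewrite pnatr_eq0.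
have eq : 1 + (q - 1) = q by ring.
rewrite eq in h2.
rewrite h2 (mulrC 2) -mulrA; apply: ler_wpM2l; first by rewrite powR_ge0.
have H2 : 2 * (2^-1 * (a `^ q + b `^ q)) = a `^ q + b `^ q by field.
by rewrite -H2 ler_pM2l.
Qed.

Lemma card_Nset (T : finType) (i j : T) m : i != j -> (0 < m)%N ->
  #|[set L : {set T} | (#|L| == m) && (i \in L) && (j \notin L)]| = 'C(#|T| - 2, m.-1).
Proof.
move=> ij m0.
set B := ~: [set i; j].
have cB : #|B| = (#|T| - 2)%N.
  have := cardsC [set i; j]; rewrite cards2 ij /B; lia.
have sub : forall A : {set T}, A \subset B -> (i \notin A) && (j \notin A).
  move=> A sAB; apply/andP; split; apply/negP => xA; have := fintype.subsetP sAB _ xA;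
  by rewrite !inE eqxx ?orbT.
rewrite -cB -cards_draws.
set Dr := [set A : {set T} | A \subset B & #|A| == m.-1].
have -> : [set L : {set T} | (#|L| == m) && (i \in L) && (j \notin L)] = (fun A => i |: A) @: Dr.
  apply/setP => L; rewrite inE; apply/idP/imsetP.
  - move=> /andP[/andP[/eqP cL iL] jL]; exists (L :\ i); last by rewrite finset.setD1K.
    rewrite inE; apply/andP; split.
      apply/fintype.subsetP => x; rewrite !inE => /andP[xi xL]; rewrite (negbTE xi) /=.
      by apply/eqP => xj; move: jL; rewrite -xj xL.
    by have := cardsD1 i L; rewrite iL cL; lia.
  - move=> [A]; rewrite inE => /andP[sAB /eqP cA] ->.
    have /andP[iA jA] := sub A sAB.
    rewrite cardsU1 iA cA !inE eqxx /= (eq_sym j i) (negbTE ij) (negbTE jA) andbT /=; apply/eqP; lia.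
rewrite card_in_imset //.
move=> A1 A2; rewrite !inE => /andP[s1 _] /andP[s2 _] e.
have /andP[i1 _] := sub A1 s1; have /andP[i2 _] := sub A2 s2.
by rewrite -(finset.setU1K i1) e finset.setU1K.
Qed.

Lemma binfact p : ('C(p.+1.*2, p.+1) * p.+1.*2 = 4 * (p.+1.*2 - 1) * 'C(p.+1.*2 - 2, p))%N.
Proof.
have e1 := mul_bin_diag p.+1.*2 p.
have e2 := mul_bin_down p.*2.+1 p.
have -> : (p.+1.*2 - 2 = p.*2)%N by lia.
have -> : (p.+1.*2 - 1 = p.*2.+1)%N by lia.
rewrite doubleS /= in e1 *.
have hX : ('C(p.*2.+2, p.+1) = 2 * 'C(p.*2.+1, p))%N.
  apply/eqP; rewrite -(eqn_pmul2l (ltn0Sn p)); apply/eqP.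
  rewrite -e1; lia.
have hY : (p.+1 * 'C(p.*2.+1, p) = p.*2.+1 * 'C(p.*2, p))%N.
  by rewrite e2; congr (_ * _)%N; lia.
rewrite hX; lia.
Qed.


Section Main.
Variables (R : realType) (X : Type) (d : X -> X -> R) (q : R) (k : nat)
  (t : 'I_k -> X).
Hypothesis hm : is_metric d.
Hypothesis q1 : 1 <= q.

Local Notation D i j := (dq d q (t i) (t j)).
Local Notation c := (2 `^ (q - 1) : R).

Lemma q0 : q != 0.
Proof. by rewrite gt_eqF // (lt_le_trans _ q1). Qed.

Lemma D_ge0 i j : 0 <= D i j.
Proof. exact: powR_ge0. Qed.

Lemma D_ii i : D i i = 0.
Proof.
case: hm => _ [h0 _]; rewrite /dq.
by rewrite (proj2 (h0 _ _) erefl) powR0 // q0.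
Qed.

Lemma D_sym i j : D i j = D j i.
Proof. by case: hm => _ [_ [hs _]]; rewrite /dq hs. Qed.

Lemma D_tri i j z : D i j <= c * (D i z + D z j).
Proof.
case: hm => hp [_ [_ ht]]; rewrite /dq.
have := @powR_half_conv R q _ _ q1 (hp (t i) (t z)) (hp (t z) (t j)).
apply: le_trans.
apply: ge0_ler_powR; first by rewrite (le_trans _ q1).
- by rewrite nnegrE.
- by rewrite nnegrE addr_ge0.
- exact: ht.
Qed.

Definition F := \sum_(i < k) \sum_(j < k) D i j.

Lemma F_cl : F = 2 * clq d q t.
Proof.
rewrite /F /clq.
have -> : \sum_(i < k) \sum_(j < k) D i j =
   \sum_(i < k) \sum_(j < k) ((if (i < j)%N then D i j else 0) + (if (j < i)%N then D i j else 0)).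
  apply: eq_bigr => i _; apply: eq_bigr => j _.
  case: (ltngtP i j) => h; rewrite ?addr0 ?add0r //.
  have -> : i = j by apply: val_inj.
  by rewrite D_ii.
rewrite (eq_bigr (fun i : 'I_k => \sum_(j < k) (if (i < j)%N then D i j else 0) +
    \sum_(j < k) (if (j < i)%N then D i j else 0))); last by move=> i _; rewrite big_split.
rewrite big_split /=.
set cl := \sum_(i < k) \sum_(j < k | (i < j)%N) D i j.
have eA : \sum_(i < k) \sum_(j < k) (if (i < j)%N then D i j else 0) = cl.
  by apply: eq_bigr => i _; rewrite [RHS]big_mkcond.
have eB : \sum_(i < k) \sum_(j < k) (if (j < i)%N then D i j else 0) = cl.
  rewrite exchange_big -eA; apply: eq_bigr => i _; apply: eq_bigr => j _.
  by rewrite D_sym.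
rewrite eA eB; ring.
Qed.

Lemma star_full z : star_cost d q t z = \sum_(j < k) D z j.
Proof. by rewrite /star_cost [RHS](bigD1 z) //= D_ii add0r. Qed.

Lemma st_spec : (0 < k)%N -> exists z, stq d q t = star_cost d q t z /\
   forall y, stq d q t <= star_cost d q t y.
Proof.
move=> k0; rewrite /stq; case: pickP => [z0 _|H]; last by have := H (Ordinal k0).
case: arg_minP => // z _ Hz; exists z; split => // y; exact: Hz.
Qed.

Lemma part1 : (0 < k)%N -> k%:R * stq d q t <= F.
Proof.
move=> k0; have [z [e Hz]] := st_spec k0; rewrite e in Hz *.
have -> : F = \sum_(y < k) star_cost d q t y.
  by apply: eq_bigr => y _; rewrite star_full.
have <- : \sum_(y < k) star_cost d q t z = k%:R * star_cost d q t z.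
  by rewrite sumr_const card_ord mulr_natl.
by apply: ler_sum => y _; apply: Hz.
Qed.

Lemma part2 : (0 < k)%N -> F <= c * (2 * k%:R * stq d q t).
Proof.
move=> k0; have [z [-> _]] := st_spec k0.
have H1 : F <= \sum_(i < k) \sum_(j < k) c * (D i z + D z j).
  by apply: ler_sum => i _; apply: ler_sum => j _; apply: D_tri.
apply: (le_trans H1) => {H1}.
rewrite star_full; under eq_bigr do rewrite -mulr_sumr.
rewrite -mulr_sumr; apply: ler_wpM2l; first by rewrite powR_ge0.
under eq_bigr => i _ do rewrite big_split /= sumr_const card_ord.
rewrite big_split /= sumrMnl sumr_const card_ord.
have -> : \sum_(i < k) D i z = \sum_(i < k) D z i.
  by apply: eq_bigr => i _; rewrite D_sym.
rewrite -mulrnDl -mulr_natr.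
move: (\sum_(j < k) D z j) => S.
rewrite le_eqVlt; apply/orP; left; apply/eqP; ring.
Qed.

Lemma bp_spec : exists L : {set 'I_k}, #|L| == k./2 /\ bpq d q t = bip_cost d q t L /\
   forall L' : {set 'I_k}, #|L'| == k./2 -> bpq d q t <= bip_cost d q t L'.
Proof.
rewrite /bpq; case: pickP => [L0 HL0|H]; last first.
  have : (0 < #|[set A : {set 'I_k} | #|A| == k./2]|)%N.
    by rewrite card_draws card_ord bin_gt0 leq_half_double -addnn; apply: leqW; apply: leq_addr.
  by move=> /card_gt0P [L]; rewrite inE H.
case: arg_minP => // L HL Hm; exists L; split => //; split => //; move=> L' HL'; exact: Hm.
Qed.

Lemma splitL (G : 'I_k -> R) (L : {set 'I_k}) :
  \sum_(i < k) G i = \sum_(i in L) G i + \sum_(i in ~: L) G i.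
Proof.
rewrite (bigID (fun i => i \in L)) /=; congr (_ + _).
by apply: eq_bigl => i; rewrite !inE.
Qed.

Lemma inner_bound (A B : {set 'I_k}) :
  #|B|%:R * \sum_(i in A) \sum_(j in A) D i j <=
  c * (2 * #|A|%:R * \sum_(i in A) \sum_(r in B) D i r).
Proof.
rewrite mulr_sumr.
have H : forall i j, #|B|%:R * D i j <= c * \sum_(r in B) (D i r + D r j).
  move=> i j; rewrite mulr_natl -sumr_const mulr_sumr; apply: ler_sum => r _; exact: D_tri.
apply: (le_trans (y := \sum_(i in A) \sum_(j in A) c * \sum_(r in B) (D i r + D r j))).
  apply: ler_sum => i _; rewrite mulr_sumr; apply: ler_sum => j _; exact: H.
under eq_bigr => i _ do rewrite -mulr_sumr.
rewrite -mulr_sumr; apply: ler_wpM2l; first by rewrite powR_ge0.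
have e1 : forall i, \sum_(j in A) \sum_(r in B) (D i r + D r j) =
   (\sum_(r in B) D i r) *+ #|A| + \sum_(j in A) \sum_(r in B) D j r.
  move=> i; rewrite -sumr_const -big_split /=; apply: eq_bigr => j _.
  by rewrite big_split /=; congr (_ + _); apply: eq_bigr => r _; exact: D_sym.
rewrite (eq_bigr _ (fun i _ => e1 i)) big_split /= sumrMnl sumr_const.
rewrite -mulrnDl -mulr_natr.
move: (\sum_(i in A) \sum_(r in B) D i r) => S.
rewrite le_eqVlt; apply/orP; left; apply/eqP; ring.
Qed.

Lemma two_c : (2 : R) `^ q = 2 * c.
Proof.
have h2 : (2:R) `^ (1 + (q - 1)) = 2 * 2 `^ (q - 1).
  rewrite [LHS]powRD ?powRr1 ?ler0n //; last by apply/implyP => _; rewrite pnatr_eq0.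
have eq : 1 + (q - 1) = q by ring.
by rewrite eq in h2.
Qed.

Lemma part4 : ~~ odd k -> (2 <= k)%N -> clq d q t <= (2 `^ q + 1) * bpq d q t.
Proof.
move=> ev k2; have [L [HL [-> _]]] := bp_spec.
have cL : #|L| = k./2 by apply/eqP.
have cR : #|~: L| = k./2.
  have := cardsC L; rewrite card_ord cL => h.
  have := odd_double_half k; rewrite (negbTE ev) add0n -addnn; lia.
have m0 : (0 < k./2)%N by apply: (leq_trans _ (half_leq k2)).
set C := bip_cost d q t L.
have eF : F = \sum_(i in L) \sum_(j in L) D i j + C +
             (\sum_(i in ~: L) \sum_(j in L) D i j + \sum_(i in ~: L) \sum_(j in ~: L) D i j).
  rewrite /F (splitL _ L); congr (_ + _).
    by rewrite -big_split /=; apply: eq_bigr => i _; rewrite (splitL _ L).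
  by rewrite -big_split /=; apply: eq_bigr => i _; rewrite (splitL _ L).
have eC : \sum_(i in ~: L) \sum_(j in L) D i j = C.
  rewrite exchange_big /C /bip_cost; apply: eq_bigr => i _; apply: eq_bigr => j _.
  exact: D_sym.
rewrite eC in eF.
have b1 := inner_bound L (~: L).
have b2 := inner_bound (~: L) L.
rewrite eC cL cR in b1 b2.
change (\sum_(i in L) \sum_(r in ~: L) D i r) with C in b1.
have Cge0 : 0 <= C by apply: sumr_ge0 => i _; apply: sumr_ge0 => j _; apply: D_ge0.
have c0 : 0 <= c by apply: powR_ge0.
have mR : 0 < (k./2)%:R :> R by rewrite ltr0n.
move: b1 b2 eF; rewrite two_c.
have := F_cl; move: F (clq d q t) (\sum_(i in L) \sum_(j in L) D i j)
   (\sum_(i in ~: L) \sum_(j in ~: L) D i j) => F' cl A B -> b1 b2 eF.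
move: c0 b1 b2; move: (2 `^ (q - 1)) (k./2%:R) mR => cc m mR c0 b1 b2.
have e : forall Z, cc * (2 * m * Z) = m * (2 * cc * Z) by move=> Z; ring.
rewrite e ler_pM2l // in b1; rewrite e ler_pM2l // in b2.
nra.
Qed.

Lemma sum_bip m : (0 < m)%N ->
  \sum_(L in [set L : {set 'I_k} | #|L| == m]) bip_cost d q t L = ('C(k - 2, m.-1))%:R * F.
Proof.
move=> m0.
have eb : forall L, bip_cost d q t L =
    \sum_(i < k) \sum_(j < k) (if (i \in L) && (j \notin L) then D i j else 0).
  move=> L; rewrite /bip_cost [LHS]big_mkcond; apply: eq_bigr => i _.
  case: (i \in L) => /=; last by rewrite big1.
  by rewrite [LHS]big_mkcond; apply: eq_bigr => j _; rewrite !inE.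
rewrite (eq_bigr _ (fun L _ => eb L)).
rewrite exchange_big; under eq_bigr do rewrite exchange_big.
rewrite /F mulr_sumr; apply: eq_bigr => i _; rewrite mulr_sumr; apply: eq_bigr => j _.
case: (eqVneq i j) => [->|ij].
  by rewrite D_ii mulr0; apply: big1 => L _; case: ifP.
have cN := @card_Nset _ i j m ij m0; rewrite card_ord in cN; rewrite -cN.
rewrite mulr_natl -sumr_const [LHS]big_mkcond [RHS]big_mkcond; apply: eq_bigr => L _.
rewrite !inE.
by case: (#|L| == m); case: (i \in L); case: (j \in L).
Qed.

Lemma part3 : ~~ odd k -> (2 <= k)%N ->
  2 * (k%:R - 1) / k%:R * bpq d q t <= clq d q t.
Proof.
move=> ev k2; have [L [HL [-> Hm]]] := bp_spec.
have m0 : (0 < k./2)%N by apply: (leq_trans _ (half_leq k2)).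
have H1 : #|[set L : {set 'I_k} | #|L| == k./2]|%:R * bip_cost d q t L <=
    \sum_(L' in [set L : {set 'I_k} | #|L| == k./2]) bip_cost d q t L'.
  rewrite mulr_natl -sumr_const; apply: ler_sum => L'; rewrite inE; exact: Hm.
rewrite sum_bip // F_cl card_draws card_ord in H1.
have ek : k = (k./2).-1.+1.*2.
  rewrite prednK //; have := odd_double_half k; rewrite (negbTE ev) add0n; lia.
have bf := binfact (k./2).-1.
rewrite -ek prednK // in bf.
move: H1; set Cn := 'C(k, k./2); set Nn := 'C(k - 2, (k./2).-1) => H1.
have Npos : (0 < Nn)%N by rewrite bin_gt0; lia.
have eR : (Cn%:R * k%:R : R) = 4 * (k%:R - 1) * Nn%:R.
  rewrite -natrM bf natrM natrM natrB; last by lia.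
  by [].
have kpos : (0 < k%:R :> R) by rewrite ltr0n; lia.
have Npos' : (0 < Nn%:R :> R) by rewrite ltr0n.
clear Npos; move: eR H1 kpos Npos'; move: (Cn%:R) (Nn%:R) (k%:R) (bip_cost d q t L) (clq d q t)
  => C N K b cl eR H1 kpos Np.
have h : C * K * b <= N * (2 * cl) * K.
  by rewrite mulrAC; apply: ler_wpM2r => //; apply: ltW.
rewrite eR in h.
rewrite -(@ler_pM2l _ (N * 2 * K)); last by rewrite !mulr_gt0.
have -> : N * 2 * K * (2 * (K - 1) / K * b) = 4 * (K - 1) * N * b.
  by field; rewrite gt_eqF.
apply: (le_trans h); rewrite le_eqVlt; apply/orP; left; apply/eqP; ring.
Qed.
End Main.

Theorem lemma4 (R : realType) (X : Type) (d : X -> X -> R) (q : R) (k : nat)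
  (t : 'I_k -> X) :
  is_metric d -> 1 <= q -> injective t -> (2 <= k)%N ->
  (k%:R / 2 * stq d q t <= clq d q t /\
   clq d q t <= 2 `^ (q - 1) * k%:R * stq d q t) /\
  (~~ odd k ->
   2 * (k%:R - 1) / k%:R * bpq d q t <= clq d q t /\
   clq d q t <= (2 `^ q + 1) * bpq d q t).
Proof.
move=> hm q1 _ k2.
have k0 : (0 < k)%N by apply: ltnW.
split; last first.
  move=> ev; split; [exact: (part3 _ _ _ _ _ _ hm q1 ev k2) | exact: (part4 _ _ _ _ _ _ hm q1 ev k2)].
have h1 := part1 _ _ _ _ _ t hm q1 k0; have h2 := part2 _ _ _ _ _ t hm q1 k0.
rewrite (F_cl _ _ _ _ _ _ hm q1) in h1 h2.
move: h1 h2; move: (k%:R) (stq d q t) (clq d q t) (2 `^ (q - 1)) => K s cl c h1 h2.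
split; nra.
Qed.
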